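(* Consider the Fast PL-ADMM-PS algorithm. Assume that the linear map $\mathcal{A}(\mathbf{x}_1,\dots,\mathbf{x}_n)=\sum_{i=1}^n\mathcal{A}_i(\mathbf{x}_i)$ is onto, that the sequence $\{\mathbf{z}^k\}$ is bounded, and that $\partial h$ and $\nabla g$ are bounded on bounded sets (i.e. for every bounded set $B$, $\sup\{\|\mathbf{v}\|:\mathbf{v}\in\partial h(\mathbf{x}),\mathbf{x}\in B\}<\infty$ and $\sup_{\mathbf{x}\in B}\|\nabla g(\mathbf{x})\|<\infty$), where $g(\mathbf{x})=\sum_i g_i(\mathbf{x}_i)$ and $h(\mathbf{x})=\sum_i h_i(\mathbf{x}_i)$. Then the sequences $\{\mathbf{x}^k\}$, $\{\mathbf{y}^k\}$ and $\{\boldsymbol{\lambda}^k\}$ are bounded.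
   Context: Setting: finite-dimensional real inner product spaces with induced norms $\|\cdot\|$. Problem: $\min\sum_{i=1}^n f_i(\mathbf{x}_i)$, $f_i=g_i+h_i$, subject to $\mathcal{A}(\mathbf{x}):=\sum_{i=1}^n\mathcal{A}_i(\mathbf{x}_i)=\mathbf{b}$, where $\mathbf{x}=(\mathbf{x}_1,\dots,\mathbf{x}_n)$, each $g_i,h_i$ is proper convex lower semicontinuous, $g_i$ is differentiable with $L_i$-Lipschitz gradient ($L_i>0$), each $\mathcal{A}_i$ is a nonzero linear map (adjoint $\mathcal{A}_i^T$, operator norm $\|\mathcal{A}_i\|$) into a common space. Fast PL-ADMM-PS: fix $\beta>0$ and $\eta_i>n\|\mathcal{A}_i\|^2$; given $\mathbf{x}^0,\mathbf{z}^0,\boldsymbol{\lambda}^0$ and $\theta^{(0)}=1$, for $k=0,1,2,\dots$, for each $i=1,\dots,n$ (in parallel): $\mathbf{y}_i^{k+1}=(1-\theta^{(k)})\mathbf{x}_i^k+\theta^{(k)}\mathbf{z}_i^k$; $\mathbf{z}_i^{k+1}=\arg\min_{\mathbf{x}_i}\ \langle\nabla g_i(\mathbf{y}_i^{k+1}),\mathbf{x}_i\rangle+h_i(\mathbf{x}_i)+\langle\boldsymbol{\lambda}^k,\mathcal{A}_i(\mathbf{x}_i)\rangle+\langle\beta\mathcal{A}_i^T(\mathcal{A}(\mathbf{z}^k)-\mathbf{b}),\mathbf{x}_i\rangle+\frac{L_i\theta^{(k)}+\beta\eta_i}{2}\|\mathbf{x}_i-\mathbf{z}_i^k\|^2$;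 $\mathbf{x}_i^{k+1}=(1-\theta^{(k)})\mathbf{x}_i^k+\theta^{(k)}\mathbf{z}_i^{k+1}$; then $\boldsymbol{\lambda}^{k+1}=\boldsymbol{\lambda}^k+\beta(\mathcal{A}(\mathbf{z}^{k+1})-\mathbf{b})$ and $\theta^{(k+1)}=\frac{-(\theta^{(k)})^2+\sqrt{(\theta^{(k)})^4+4(\theta^{(k)})^2}}{2}$. *)

(* Defs.v *)
From Stdlib Require Import Reals Lra.
Open Scope R_scope.

Fixpoint rsum (f : nat -> R) (n : nat) : R :=
  match n with O => 0 | S k => rsum f k + f k end.

Definition vec (d : nat) : Type :=
  {v : nat -> R | forall j, (d <= j)%nat -> v j = 0}.

Definition vval {d : nat} (u : vec d) : nat -> R := proj1_sig u.

Definition vzero (d : nat) : vec d := exist _ (fun _ => 0) (fun _ _ => eq_refl).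

Definition vadd {d : nat} (u v : vec d) : vec d.
Proof.
  refine (exist _ (fun j => vval u j + vval v j) _).
  intros j Hj; unfold vval; rewrite (proj2_sig u j Hj), (proj2_sig v j Hj); ring.
Defined.

Definition vscale {d : nat} (c : R) (u : vec d) : vec d.
Proof.
  refine (exist _ (fun j => c * vval u j) _).
  intros j Hj; unfold vval; rewrite (proj2_sig u j Hj); ring.
Defined.

Definition vsub {d : nat} (u v : vec d) : vec d := vadd u (vscale (-1) v).

Definition inner {d : nat} (u v : vec d) : R := rsum (fun j => vval u j * vval v j) d.
Definition norm {d : nat} (u : vec d) : R := sqrt (inner u u).

(** Extended reals (-oo excluded): values of proper functions. *)
Inductive ERbar : Type := fin : R -> ERbar | pinf : ERbar.

Definition ext_le (a b : ERbar) : Prop :=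
  match a, b with
  | _, pinf => True
  | pinf, fin _ => False
  | fin x, fin y => x <= y
  end.

Definition ext_add (a b : ERbar) : ERbar :=
  match a, b with fin x, fin y => fin (x + y) | _, _ => pinf end.

Definition real_lt_ext (r : R) (a : ERbar) : Prop :=
  match a with fin x => r < x | pinf => True end.

Definition proper {d : nat} (h : vec d -> ERbar) : Prop := exists x, h x <> pinf.

Definition convex_ext {d : nat} (h : vec d -> ERbar) : Prop :=
  forall x y a b t, 0 <= t <= 1 -> h x = fin a -> h y = fin b ->
    exists c, h (vadd (vscale t x) (vscale (1 - t) y)) = fin c /\
              c <= t * a + (1 - t) * b.

Definition lsc {d : nat} (h : vec d -> ERbar) : Prop :=
  forall x r, real_lt_ext r (h x) ->
    exists delta, 0 < delta /\
      forall y, norm (vsub y x) < delta -> real_lt_ext r (h y).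

Definition convex {d : nat} (g : vec d -> R) : Prop :=
  forall x y t, 0 <= t <= 1 ->
    g (vadd (vscale t x) (vscale (1 - t) y)) <= t * g x + (1 - t) * g y.

Definition is_gradient {d : nat} (g : vec d -> R) (dg : vec d -> vec d) : Prop :=
  forall x eps, 0 < eps -> exists delta, 0 < delta /\
    forall y, norm (vsub y x) < delta ->
      Rabs (g y - g x - inner (dg x) (vsub y x)) <= eps * norm (vsub y x).

Definition lipschitz {d1 d2 : nat} (f : vec d1 -> vec d2) (L : R) : Prop :=
  forall x y, norm (vsub (f x) (f y)) <= L * norm (vsub x y).

Definition linear_map {d1 d2 : nat} (A : vec d1 -> vec d2) : Prop :=
  (forall u v, A (vadd u v) = vadd (A u) (A v)) /\
  (forall c u, A (vscale c u) = vscale c (A u)).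

Definition is_adjoint {d1 d2 : nat} (A : vec d1 -> vec d2) (AT : vec d2 -> vec d1) : Prop :=
  forall x y, inner (A x) y = inner x (AT y).

Definition is_opnorm {d1 d2 : nat} (A : vec d1 -> vec d2) (nA : R) : Prop :=
  is_lub (fun r => exists x, norm x <= 1 /\ r = norm (A x)) nA.

(** Product space R^{d 0} x ... x R^{d (n-1)}: blocks indexed by i < n
    (blocks with index >= n are irrelevant). *)
Definition pvec (d : nat -> nat) : Type := forall i : nat, vec (d i).

Definition pinner (n : nat) (d : nat -> nat) (x y : pvec d) : R :=
  rsum (fun i => inner (x i) (y i)) n.
Definition pnorm (n : nat) (d : nat -> nat) (x : pvec d) : R := sqrt (pinner n d x x).
Definition psub (d : nat -> nat) (x y : pvec d) : pvec d := fun i => vsub (x i) (y i).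

Fixpoint Asum (m : nat) (d : nat -> nat) (A : forall i, vec (d i) -> vec m)
  (x : pvec d) (k : nat) : vec m :=
  match k with
  | O => vzero m
  | S k' => vadd (Asum m d A x k') (A k' (x k'))
  end.
Definition Amap (n m : nat) (d : nat -> nat) (A : forall i, vec (d i) -> vec m)
  (x : pvec d) : vec m := Asum m d A x n.

Fixpoint hsum_aux (d : nat -> nat) (h : forall i, vec (d i) -> ERbar) (x : pvec d)
  (k : nat) : ERbar :=
  match k with
  | O => fin 0
  | S k' => ext_add (hsum_aux d h x k') (h k' (x k'))
  end.
Definition hsum (n : nat) (d : nat -> nat) (h : forall i, vec (d i) -> ERbar)
  (x : pvec d) : ERbar := hsum_aux d h x n.

Definition subgrad_h (n : nat) (d : nat -> nat) (h : forall i, vec (d i) -> ERbar)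
  (x v : pvec d) : Prop :=
  exists hx, hsum n d h x = fin hx /\
    forall y, ext_le (fin (hx + pinner n d v (psub d y x))) (hsum n d h y).

Definition grad_g (d : nat -> nat) (dg : forall i, vec (d i) -> vec (d i))
  (x : pvec d) : pvec d := fun i => dg i (x i).

Definition pbounded_set (n : nat) (d : nat -> nat) (B : pvec d -> Prop) : Prop :=
  exists M, forall x, B x -> pnorm n d x <= M.

(* Main.v *)
Require Import Defs.
From Stdlib Require Import Reals Lra Lia.
Open Scope R_scope.


Lemma rsum_ext f g N : (forall l, (l < N)%nat -> f l = g l) -> rsum f N = rsum g N.
Proof. induction N; simpl; intros H; auto. rewrite IHN by (intros; apply H; lia). rewrite H by lia. reflexivity. Qed.
Lemma rsum_plus f g N : rsum (fun l => f l + g l) N = rsum f N + rsum g N.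
Proof. induction N; simpl; [ring|rewrite IHN; ring]. Qed.
Lemma rsum_minus f g N : rsum (fun l => f l - g l) N = rsum f N - rsum g N.
Proof. induction N; simpl; [ring|rewrite IHN; ring]. Qed.
Lemma rsum_opp f N : rsum (fun l => - f l) N = - rsum f N.
Proof. induction N; simpl; [ring|rewrite IHN; ring]. Qed.
Lemma rsum_scal c f N : rsum (fun l => c * f l) N = c * rsum f N.
Proof. induction N; simpl; [ring|rewrite IHN; ring]. Qed.
Lemma rsum_le f g N : (forall l, (l < N)%nat -> f l <= g l) -> rsum f N <= rsum g N.
Proof. induction N; simpl; intros H; [lra|]. assert (f N <= g N) by (apply H; lia).
 assert (rsum f N <= rsum g N) by (apply IHN; intros; apply H; lia). lra. Qed.
Lemma rsum_zero N : rsum (fun _ => 0) N = 0.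
Proof. induction N; simpl; [ring|rewrite IHN; ring]. Qed.
Lemma rsum_single f j N : (forall l, l <> j -> f l = 0) -> (j < N)%nat -> rsum f N = f j.
Proof. induction N; intros H Hj; [lia|]. simpl. destruct (Nat.eq_dec j N).
 - subst. rewrite (rsum_ext f (fun _ => 0)). rewrite rsum_zero; ring. intros; apply H; lia.
 - rewrite (H N) by auto. rewrite IHN; auto; [ring|lia]. Qed.

Lemma vval_add {D} (u v : vec D) j : vval (vadd u v) j = vval u j + vval v j.
Proof. reflexivity. Qed.
Lemma vval_scale {D} c (u : vec D) j : vval (vscale c u) j = c * vval u j.
Proof. reflexivity. Qed.
Lemma vval_sub {D} (u v : vec D) j : vval (vsub u v) j = vval u j - vval v j.
Proof. unfold vsub. rewrite vval_add, vval_scale. ring. Qed.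
Ltac vs := cbv beta; rewrite ?vval_sub, ?vval_add, ?vval_scale.

Lemma inner_add_l {D} (u v w : vec D) : inner (vadd u v) w = inner u w + inner v w.
Proof. unfold inner. rewrite <- rsum_plus. apply rsum_ext; intros; vs; ring. Qed.
Lemma inner_add_r {D} (u v w : vec D) : inner w (vadd u v) = inner w u + inner w v.
Proof. unfold inner. rewrite <- rsum_plus. apply rsum_ext; intros; vs; ring. Qed.
Lemma inner_scal_l {D} c (u w : vec D) : inner (vscale c u) w = c * inner u w.
Proof. unfold inner. rewrite <- rsum_scal. apply rsum_ext; intros; vs; ring. Qed.
Lemma inner_scal_r {D} c (u w : vec D) : inner w (vscale c u) = c * inner w u.
Proof. unfold inner. rewrite <- rsum_scal. apply rsum_ext; intros; vs; ring. Qed.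
Lemma inner_sub_l {D} (u v w : vec D) : inner (vsub u v) w = inner u w - inner v w.
Proof. unfold inner. rewrite <- rsum_minus. apply rsum_ext; intros; vs; ring. Qed.
Lemma inner_sub_r {D} (u v w : vec D) : inner w (vsub u v) = inner w u - inner w v.
Proof. unfold inner. rewrite <- rsum_minus. apply rsum_ext; intros; vs; ring. Qed.
Lemma inner_comm {D} (u v : vec D) : inner u v = inner v u.
Proof. unfold inner. apply rsum_ext; intros; ring. Qed.
Lemma inner_zero_r {D} (u : vec D) : inner u (vzero D) = 0.
Proof. unfold inner. rewrite <- (rsum_zero D). apply rsum_ext; intros; simpl; ring. Qed.
Lemma inner_nonneg {D} (u : vec D) : 0 <= inner u u.
Proof. unfold inner. rewrite <- (rsum_zero D). apply rsum_le; intros; nra. Qed.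
Lemma norm_sq {D} (u : vec D) : norm u ^ 2 = inner u u.
Proof. unfold norm. apply pow2_sqrt, inner_nonneg. Qed.
Lemma inner_bd {D} (u v : vec D) :
  - ((inner u u + inner v v) / 2) <= inner u v <= (inner u u + inner v v) / 2.
Proof. unfold inner. split.
 - rewrite <- rsum_plus. unfold Rdiv. rewrite (Rmult_comm _ (/2)), <- (rsum_scal (/2)), <- rsum_opp. apply rsum_le; intros. pose proof (pow2_ge_0 (vval u l + vval v l)). nra.
 - rewrite <- rsum_plus. unfold Rdiv. rewrite (Rmult_comm _ (/2)), <- (rsum_scal (/2)). apply rsum_le; intros. pose proof (pow2_ge_0 (vval u l - vval v l)). nra.
Qed.

Lemma pinner_bd n d (a b : pvec d) :
  - ((pinner n d a a + pinner n d b b) / 2) <= pinner n d a b <= (pinner n d a a + pinner n d b b) / 2.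
Proof. unfold pinner. split.
 - rewrite <- rsum_plus. unfold Rdiv. rewrite (Rmult_comm _ (/2)), <- (rsum_scal (/2)), <- rsum_opp. apply rsum_le; intros.
   pose proof (inner_bd (a l) (b l)). lra.
 - rewrite <- rsum_plus. unfold Rdiv. rewrite (Rmult_comm _ (/2)), <- (rsum_scal (/2)). apply rsum_le; intros.
   pose proof (inner_bd (a l) (b l)). lra.
Qed.
Lemma pinner_nonneg n d (a : pvec d) : 0 <= pinner n d a a.
Proof. unfold pinner. rewrite <- (rsum_zero n). apply rsum_le; intros. apply inner_nonneg. Qed.
Lemma pnorm_sq n d (a : pvec d) M : pnorm n d a <= M -> pinner n d a a <= M ^ 2 /\ 0 <= M.
Proof. intros H. unfold pnorm in H. pose proof (sqrt_pos (pinner n d a a)).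
 pose proof (pow2_sqrt _ (pinner_nonneg n d a)). split; [|lra].
 rewrite <- H1. nra. Qed.
Lemma pnorm_le n d (a : pvec d) K : pinner n d a a <= K -> pnorm n d a <= sqrt K.
Proof. intros; unfold pnorm; apply sqrt_le_1_alt; auto. Qed.

Lemma conv_pinner n d (X Y Z : pvec d) t : 0 <= t <= 1 ->
  (forall i, (i < n)%nat -> X i = vadd (vscale (1 - t) (Y i)) (vscale t (Z i))) ->
  pinner n d X X <= (1 - t) * pinner n d Y Y + t * pinner n d Z Z.
Proof. intros Ht H. unfold pinner. rewrite <- !rsum_scal, <- rsum_plus. apply rsum_le; intros i Hi.
 rewrite H by auto. unfold inner. rewrite <- !rsum_scal, <- rsum_plus. apply rsum_le; intros l Hl. vs.
 set (a := vval (Y i) l). set (b := vval (Z i) l).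
 assert (0 <= t * (1 - t) * ((a - b) * (a - b))). { apply Rmult_le_pos; [apply Rmult_le_pos; lra| apply Rle_0_sqr]. }
 assert (E : (1 - t) * (a * a) + t * (b * b) - ((1 - t) * a + t * b) * ((1 - t) * a + t * b) = t * (1 - t) * ((a - b) * (a - b))) by ring. lra.
Qed.

Lemma theta_bd (th : nat -> R) : th 0%nat = 1 ->
  (forall k, th (S k) = (- (th k) ^ 2 + sqrt ((th k) ^ 4 + 4 * (th k) ^ 2)) / 2) ->
  forall k, 0 <= th k <= 1.
Proof. intros H0 HS k. induction k; [rewrite H0; lra|]. rewrite HS.
 set (t := th k) in *. set (s := sqrt (t ^ 4 + 4 * t ^ 2)).
 assert (Hs : s * s = t ^ 4 + 4 * t ^ 2) by (apply sqrt_sqrt; nra).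
 assert (0 <= s) by apply sqrt_pos.
 assert ((s - t^2) * (s + t^2) = 4 * t^2) by nra.
 assert ((s - t^2 - 2) * (s + t^2 + 2) = -4) by nra.
 split; nra.
Qed.

Lemma lim_arg X Y K : (forall t, 0 < t <= 1 -> X <= Y + t * K) -> X <= Y.
Proof. intros H. destruct (Rle_dec X Y) as [|Hn]; auto. exfalso.
 set (t := (X - Y) / (X - Y + Rabs K + 1)). pose proof (Rabs_pos K).
 assert (0 < t <= 1). { unfold t; split. apply Rdiv_lt_0_compat; lra.
   apply Rmult_le_reg_r with (X - Y + Rabs K + 1); [lra|]. unfold Rdiv. rewrite Rmult_assoc, Rinv_l; lra. }
 specialize (H t H1). assert (t * K <= t * Rabs K) by (apply Rmult_le_compat_l; [lra|apply Rle_abs]).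
 assert (t * (X - Y + Rabs K + 1) = X - Y) by (unfold t; field; lra). nra.
Qed.

Lemma block_sub (D:nat) (h: vec D -> ERbar) (a z z0 : vec D) (c:R) :
  convex_ext h -> proper h ->
  (forall w, ext_le (ext_add (h z) (fin (inner a z + c/2 * norm (vsub z z0) ^2)))
                    (ext_add (h w) (fin (inner a w + c/2 * norm (vsub w z0) ^2)))) ->
  exists hz, h z = fin hz /\ forall w,
    ext_le (fin (hz + inner (vscale (-1) (vadd a (vscale c (vsub z z0)))) (vsub w z))) (h w).
Proof.
  intros Hc [w0 Hw0] Hmin.
  destruct (h z) as [hz|] eqn:Ehz.
  2:{ exfalso. specialize (Hmin w0). destruct (h w0); simpl in Hmin; auto. }
  exists hz; split; auto. intro w. destruct (h w) as [hw|] eqn:Ehw; simpl; auto.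
  set (P := inner (vsub z z0) (vsub w z)). set (Q := inner (vsub w z) (vsub w z)).
  assert (EV : inner (vscale (-1) (vadd a (vscale c (vsub z z0)))) (vsub w z)
      = - (inner a w - inner a z) - c * P).
  { rewrite inner_scal_l, inner_add_l, inner_scal_l, inner_sub_r. unfold P. ring. }
  rewrite EV.
  apply (lim_arg _ _ (c * Q / 2)). intros t Ht.
  destruct (Hc w z hw hz t ltac:(lra) Ehw Ehz) as [cw [Ecw Hcw]].
  set (wt := vadd (vscale t w) (vscale (1 - t) z)) in *.
  specialize (Hmin wt). rewrite Ecw in Hmin. cbn [ext_add ext_le] in Hmin.
  assert (Ea : inner a wt = t * inner a w + (1 - t) * inner a z).
  { unfold wt. rewrite inner_add_r, !inner_scal_r. ring. }
  assert (En : norm (vsub wt z0) ^ 2 = norm (vsub z z0) ^ 2 + 2 * t * P + t ^ 2 * Q).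
  { rewrite !norm_sq. unfold P, Q, inner, wt. rewrite <- !rsum_scal, <- !rsum_plus.
    apply rsum_ext; intros; vs; ring. }
  rewrite Ea, En in Hmin.
  apply Rmult_le_reg_l with t; [lra|]. nra.
Qed.

Lemma hsum_sub n d (h : forall i, vec (d i) -> ERbar) (z v : pvec d) :
  (forall i, (i < n)%nat -> exists hz, h i (z i) = fin hz /\
     forall w, ext_le (fin (hz + inner (v i) (vsub w (z i)))) (h i w)) ->
  subgrad_h n d h z v.
Proof.
  intros H. unfold subgrad_h, hsum, pinner.
  enough (forall k, (k <= n)%nat -> exists H, hsum_aux d h z k = fin H /\
    forall y, ext_le (fin (H + rsum (fun i => inner (v i) (psub d y z i)) k)) (hsum_aux d h y k))
    by (apply H0; lia).
  induction k; intros Hk.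
  - exists 0; split; auto. intros y; simpl; lra.
  - destruct IHk as [S0 [E0 H0]]; [lia|]. destruct (H k ltac:(lia)) as [hz [Ez Hs]].
    exists (S0 + hz). simpl. rewrite E0, Ez. split; auto. intros y.
    specialize (H0 y). specialize (Hs (y k)). unfold psub at 2.
    destruct (hsum_aux d h y k); destruct (h k (y k)); simpl in *; auto. lra.
Qed.

Definition ebasis (m j : nat) : vec m.
Proof.
  refine (exist _ (fun l => if Nat.ltb l m then (if Nat.eqb l j then 1 else 0) else 0) _).
  intros l Hl. destruct (Nat.ltb_spec l m); [lia|reflexivity].
Defined.

Lemma inner_basis m (v : vec m) j : (j < m)%nat -> inner v (ebasis m j) = vval v j.
Proof.
  intros Hj. unfold inner. rewrite (rsum_single _ j); auto.
  - simpl. destruct (Nat.ltb_spec j m); [|lia]. rewrite Nat.eqb_refl. ring.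
  - intros l Hl. simpl. destruct (Nat.eqb_spec l j); [lia|]. destruct (Nat.ltb l m); ring.
Qed.

Lemma inner_Asum m d (A : forall i, vec (d i) -> vec m) (u : pvec d) c k :
  inner c (Asum m d A u k) = rsum (fun i => inner c (A i (u i))) k.
Proof. induction k; simpl. apply inner_zero_r. rewrite inner_add_r, IHk. reflexivity. Qed.

Lemma scale_bd c X B : 0 <= c -> - B <= X <= B -> - (c * B) <= c * X <= c * B.
Proof. intros; split; nra. Qed.
Lemma unit_scale_bd c X B : 0 <= c <= 1 -> - B <= X <= B -> - B <= c * X <= B.
Proof. intros; split; nra. Qed.

Theorem theorem3
  (n m : nat) (d : nat -> nat)
  (g : forall i, vec (d i) -> R) (dg : forall i, vec (d i) -> vec (d i))
  (h : forall i, vec (d i) -> ERbar)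
  (L : nat -> R)
  (A : forall i, vec (d i) -> vec m) (AT : forall i, vec m -> vec (d i))
  (b : vec m) (beta : R) (eta : nat -> R)
  (x y z : nat -> pvec d) (lam : nat -> vec m) (theta : nat -> R)
  (* standing assumptions *)
  (Hg_conv : forall i, (i < n)%nat -> convex (g i))
  (Hg_grad : forall i, (i < n)%nat -> is_gradient (g i) (dg i))
  (HL : forall i, (i < n)%nat -> 0 < L i)
  (Hg_lip : forall i, (i < n)%nat -> lipschitz (dg i) (L i))
  (Hh_prop : forall i, (i < n)%nat -> proper (h i))
  (Hh_conv : forall i, (i < n)%nat -> convex_ext (h i))
  (Hh_lsc : forall i, (i < n)%nat -> lsc (h i))
  (HA_lin : forall i, (i < n)%nat -> linear_map (A i))
  (HA_nz : forall i, (i < n)%nat -> exists u, A i u <> vzero m)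
  (HAT : forall i, (i < n)%nat -> is_adjoint (A i) (AT i))
  (Hbeta : 0 < beta)
  (Heta : forall i, (i < n)%nat ->
     exists nA, is_opnorm (A i) nA /\ INR n * nA ^ 2 < eta i)
  (* the Fast PL-ADMM-PS iteration *)
  (Htheta0 : theta 0%nat = 1)
  (Htheta : forall k, theta (S k) =
     (- (theta k) ^ 2 + sqrt ((theta k) ^ 4 + 4 * (theta k) ^ 2)) / 2)
  (Hy : forall k i, (i < n)%nat ->
     y (S k) i = vadd (vscale (1 - theta k) (x k i)) (vscale (theta k) (z k i)))
  (Hz : forall k i, (i < n)%nat -> forall w : vec (d i),
     ext_le
       (ext_add (h i (z (S k) i))
          (fin (inner (dg i (y (S k) i)) (z (S k) i)
                + inner (lam k) (A i (z (S k) i))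
                + inner (vscale beta (AT i (vsub (Amap n m d A (z k)) b))) (z (S k) i)
                + (L i * theta k + beta * eta i) / 2 * (norm (vsub (z (S k) i) (z k i))) ^ 2)))
       (ext_add (h i w)
          (fin (inner (dg i (y (S k) i)) w
                + inner (lam k) (A i w)
                + inner (vscale beta (AT i (vsub (Amap n m d A (z k)) b))) w
                + (L i * theta k + beta * eta i) / 2 * (norm (vsub w (z k i))) ^ 2))))
  (Hx : forall k i, (i < n)%nat ->
     x (S k) i = vadd (vscale (1 - theta k) (x k i)) (vscale (theta k) (z (S k) i)))
  (Hlam : forall k,
     lam (S k) = vadd (lam k) (vscale beta (vsub (Amap n m d A (z (S k))) b)))
  (* assumptions of the theorem *)
  (Honto : forall c : vec m, exists u : pvec d, Amap n m d A u = c)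
  (Hzb : exists M, forall k, pnorm n d (z k) <= M)
  (Hsub_bdd : forall B : pvec d -> Prop, pbounded_set n d B ->
     exists M, forall u v, B u -> subgrad_h n d h u v -> pnorm n d v <= M)
  (Hgrad_bdd : forall B : pvec d -> Prop, pbounded_set n d B ->
     exists M, forall u, B u -> pnorm n d (grad_g d dg u) <= M) :
  (exists M, forall k, pnorm n d (x k) <= M) /\
  (exists M, forall k, pnorm n d (y k) <= M) /\
  (exists M, forall k, norm (lam k) <= M).
Proof.
  pose proof (theta_bd theta Htheta0 Htheta) as Hth.
  destruct Hzb as [Mz HMz].
  assert (Pz : forall k, pinner n d (z k) (z k) <= Mz^2) by (intro k; apply (pnorm_sq _ _ _ _ (HMz k))).
  assert (Mz0 : 0 <= Mz) by apply (pnorm_sq _ _ _ _ (HMz 0%nat)).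
  set (Kx := Rmax (pinner n d (x 0%nat) (x 0%nat)) (Mz^2)).
  assert (Px : forall k, pinner n d (x k) (x k) <= Kx).
  { induction k. unfold Kx; apply Rmax_l.
    pose proof (conv_pinner n d (x (S k)) (x k) (z (S k)) (theta k) (Hth k) (Hx k)).
    pose proof (Pz (S k)). assert (Mz^2 <= Kx) by apply Rmax_r. specialize (Hth k). nra. }
  set (Ky := Rmax (pinner n d (y 0%nat) (y 0%nat)) Kx).
  assert (Py : forall k, pinner n d (y k) (y k) <= Ky).
  { destruct k. apply Rmax_l. pose proof (conv_pinner n d (y (S k)) (x k) (z k) (theta k) (Hth k) (Hy k)).
    pose proof (Pz k). pose proof (Px k). assert (Mz^2 <= Kx) by apply Rmax_r.
    assert (Kx <= Ky) by apply Rmax_r. specialize (Hth k). nra. }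
  split; [exists (sqrt Kx); intro k; apply pnorm_le, Px|].
  split; [exists (sqrt Ky); intro k; apply pnorm_le, Py|].
  set (r := fun k => vsub (Amap n m d A (z k)) b).
  set (avec := fun k i => vadd (vadd (dg i (y (S k) i)) (AT i (lam k))) (vscale beta (AT i (r k)))).
  set (cc := fun k i => L i * theta k + beta * eta i).
  set (V := fun k (i:nat) => vscale (-1) (vadd (avec k i) (vscale (cc k i) (vsub (z (S k) i) (z k i))))).
  assert (HV : forall k, subgrad_h n d h (z (S k)) (V k)).
  { intro k. apply hsum_sub. intros i Hi. unfold V.
    apply block_sub; auto. intro w.
    assert (E : forall w', inner (dg i (y (S k) i)) w' + inner (lam k) (A i w')
        + inner (vscale beta (AT i (vsub (Amap n m d A (z k)) b))) w' = inner (avec k i) w').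
    { intro w'. unfold avec, r. rewrite !inner_add_l, !inner_scal_l.
      rewrite (inner_comm (lam k)), (HAT i Hi), (inner_comm w'). ring. }
    pose proof (Hz k i Hi w) as Hzw. rewrite (E w), (E (z (S k) i)) in Hzw. exact Hzw. }
  destruct (Hsub_bdd (fun u => exists k, u = z (S k))) as [Mv HMv].
  { exists Mz; intros u [k ->]; auto. }
  assert (Pv : forall k, pinner n d (V k) (V k) <= Mv^2).
  { intro k. apply (pnorm_sq _ _ _ _ (HMv (z (S k)) (V k) (ex_intro _ k eq_refl) (HV k))). }
  destruct (Hgrad_bdd (fun u => exists k, u = y (S k))) as [Mg HMg].
  { exists (sqrt Ky); intros u [k ->]; apply pnorm_le, Py. }
  assert (Pg : forall k, pinner n d (grad_g d dg (y (S k))) (grad_g d dg (y (S k))) <= Mg^2).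
  { intro k. apply (pnorm_sq _ _ _ _ (HMg (y (S k)) (ex_intro _ k eq_refl))). }
  assert (Hj : forall j, (j < m)%nat -> exists K, forall k, Rabs (vval (lam k) j) <= K).
  { intros j Hjm. destruct (Honto (ebasis m j)) as [u Hu].
    set (uL := fun i => vscale (L i) (u i)).
    set (uE := fun i => vscale (eta i) (u i)).
    set (W := fun i => AT i (ebasis m j)).
    assert (Elam : forall k, vval (lam k) j = - pinner n d (V k) u
        - pinner n d (grad_g d dg (y (S k))) u - beta * vval (r k) j
        - theta k * (pinner n d (z (S k)) uL - pinner n d (z k) uL)
        - beta * (pinner n d (z (S k)) uE - pinner n d (z k) uE)).
    { intro k. rewrite <- (inner_basis m (lam k) j Hjm), <- (inner_basis m (r k) j Hjm), <- Hu.
      unfold Amap. rewrite !inner_Asum.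
      unfold pinner. repeat (rewrite <- rsum_minus || rewrite <- rsum_opp || rewrite <- rsum_scal).
      apply rsum_ext. intros i Hi. unfold V, avec, cc, uL, uE, grad_g. cbv beta.
      repeat rewrite ?inner_scal_l, ?inner_add_l, ?inner_sub_l, ?inner_scal_r.
      rewrite (inner_comm (lam k)), (HAT i Hi), (inner_comm (r k)), (HAT i Hi).
      rewrite (inner_comm (u i) (AT i (lam k))), (inner_comm (u i) (AT i (r k))). ring. }
    assert (Er : forall k, vval (r k) j = pinner n d (z k) W - vval b j).
    { intro k. unfold r. rewrite vval_sub, <- (inner_basis m _ j Hjm), inner_comm.
      unfold Amap. rewrite inner_Asum. unfold pinner. f_equal. apply rsum_ext. intros i Hi.
      unfold W. rewrite inner_comm, (HAT i Hi). reflexivity. }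
    set (Pu := pinner n d u u). set (PL := pinner n d uL uL). set (PE := pinner n d uE uE).
    set (PW := pinner n d W W).
    exists ((Mv^2 + Pu)/2 + (Mg^2 + Pu)/2 + beta * ((Mz^2 + PW)/2 + Rabs (vval b j))
            + ((Mz^2 + PL)/2 + (Mz^2 + PL)/2) + beta * ((Mz^2 + PE)/2 + (Mz^2 + PE)/2)).
    intro k. rewrite Elam, Er. apply Rabs_le.
    pose proof (pinner_bd n d (V k) u) as B1. pose proof (Pv k).
    pose proof (pinner_bd n d (grad_g d dg (y (S k))) u) as B2. pose proof (Pg k).
    pose proof (pinner_bd n d (z k) W) as B3. pose proof (Pz k). pose proof (Pz (S k)).
    pose proof (pinner_bd n d (z (S k)) uL) as B4. pose proof (pinner_bd n d (z k) uL) as B5.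
    pose proof (pinner_bd n d (z (S k)) uE) as B6. pose proof (pinner_bd n d (z k) uE) as B7.
    fold Pu PL PE PW in B1, B2, B3, B4, B5, B6, B7.
    assert (Hb : - Rabs (vval b j) <= vval b j <= Rabs (vval b j)).
    { split; [pose proof (Rle_abs (- vval b j)) as Hq; rewrite Rabs_Ropp in Hq; lra | apply Rle_abs]. }
    assert (C3 := scale_bd beta (pinner n d (z k) W - vval b j) ((Mz^2 + PW)/2 + Rabs (vval b j))
                  ltac:(lra) ltac:(lra)).
    assert (C4 := unit_scale_bd (theta k) (pinner n d (z (S k)) uL - pinner n d (z k) uL)
                  ((Mz^2 + PL)/2 + (Mz^2 + PL)/2) (Hth k) ltac:(lra)).
    assert (C5 := scale_bd beta (pinner n d (z (S k)) uE - pinner n d (z k) uE)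
                  ((Mz^2 + PE)/2 + (Mz^2 + PE)/2) ltac:(lra) ltac:(lra)).
    split; lra.
  }
  assert (HK : forall N, (N <= m)%nat -> exists K, forall j k, (j < N)%nat -> Rabs (vval (lam k) j) <= K).
  { induction N; intros HN.
    - exists 0; intros; lia.
    - destruct IHN as [K1 HK1]; [lia|]. destruct (Hj N ltac:(lia)) as [K2 HK2].
      exists (Rmax K1 K2). intros j k Hjk. destruct (Nat.eq_dec j N).
      + subst. eapply Rle_trans; [apply HK2|apply Rmax_r].
      + eapply Rle_trans; [apply HK1; lia|apply Rmax_l]. }
  destruct (HK m (le_n m)) as [K HK'].
  exists (sqrt (rsum (fun _ => K * K) m)). intro k. unfold norm. apply sqrt_le_1_alt.
  unfold inner. apply rsum_le. intros j Hjm. specialize (HK' j k Hjm).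
  set (q := vval (lam k) j) in *. pose proof (Rabs_pos q).
  assert (Rabs q * Rabs q = q * q) by (rewrite <- Rabs_mult; apply Rabs_right; nra).
  nra.
Qed.
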